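(* For every $x \in \mathbb{R}^z$ and $\ell \in \mathbb{N}$ there exists a time series $x' \in \mathrm{set}(x)^{z'}$ with $z' \in O\big(2^{|\mathrm{set}(x)|^{(2\ell + 2)}}\big)$ such that $D_{(x,\ell)} = D_{(x',\ell)}$.
   Context: For $x=(x_1,\dots,x_z)\in\mathbb{R}^z$, $\mathrm{set}(x)=\{x_i:1\le i\le z\}$. A traversal between sequences of lengths $z$ and $\ell$ is a sequence of index pairs from $(1,1)$ to $(z,\ell)$ where each step increases each index by $0$ or $1$ and at least one index by $1$; $\mathcal{T}_{z,\ell}$ is the set of traversals. For $T\in\mathcal{T}_{z,\ell}$, the traversal sectors are $S_j^{(x,T)}=\{x_i:(i,j)\in T\}$ for $j\in[\ell]$, and the $\ell$-profile of $(x,T)$ is $\big((\min S_j^{(x,T)},\max S_j^{(x,T)})\big)_{j=1}^{\ell}$. $D_{(x,\ell)}$ is the set of all $\ell$-profiles of $(x,T)$ over $T\in\mathcal{T}_{z,\ell}$ (for $x'\in\mathbb{R}^{z'}$, over $T\in\mathcal{T}_{z',\ell}$). *)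

(* Defs.v *)
From mathcomp Require Import all_boot all_order all_algebra.
From mathcomp Require Import reals.
Set Implicit Arguments. Unset Strict Implicit. Unset Printing Implicit Defensive.
Import Order.TTheory GRing.Theory Num.Theory.
Local Open Scope ring_scope.

Section Defs.
Variable R : realType.

(* A time series x = (x_1,...,x_z) is a sequence x : seq R with z = size x;
   entry x_i (1-based) is nth 0 x i.-1. *)
Definition entry (x : seq R) (i : nat) : R := nth 0 x i.-1.

Definition trav_step (p q : nat * nat) : bool :=
  [&& ((q.1 == p.1) || (q.1 == p.1.+1)),
      ((q.2 == p.2) || (q.2 == p.2.+1)) &
      (q != p)].

Definition traversal (z l : nat) (T : seq (nat * nat)) : Prop :=
  exists T' : seq (nat * nat),
    T = (1%N, 1%N) :: T' /\ path trav_step (1%N, 1%N) T' /\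
    last (1%N, 1%N) T' = (z, l).

Definition sector (x : seq R) (T : seq (nat * nat)) (j : nat) : seq R :=
  [seq entry x p.1 | p <- T & p.2 == j].

Definition seqmin (s : seq R) : R := foldr Order.min (head 0 s) (behead s).
Definition seqmax (s : seq R) : R := foldr Order.max (head 0 s) (behead s).

Definition profile (x : seq R) (l : nat) (T : seq (nat * nat)) : seq (R * R) :=
  [seq (seqmin (sector x T j), seqmax (sector x T j)) | j <- iota 1 l].

Definition Dprof (x : seq R) (l : nat) : seq (R * R) -> Prop :=
  fun p => exists T, traversal (size x) l T /\ p = profile x l T.

End Defs.

(* Main.v *)
Require Import Defs.
From mathcomp Require Import all_boot all_order all_algebra.
From mathcomp Require Import boolp reals.
From Stdlib Require Import FunctionalExtensionality PropExtensionality.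
Import Order.TTheory GRing.Theory Num.Theory.

Set Implicit Arguments. Unset Strict Implicit.

Section S.
Variable R : realType.

Inductive trv : nat -> nat -> seq (nat * nat) -> Prop :=
| trv1 : trv 1 1 [:: (1, 1)]
| trvS z l T z' l' : trv z l T -> trav_step (z, l) (z', l') ->
    trv z' l' (rcons T (z', l')).

Lemma traversal_trv z l T : traversal z l T <-> trv z l T.
Proof.
split.
- case=> T' [-> [Hp Hl]].
  elim/last_ind: T' z l Hp Hl => [|T'' q IH] z l Hp Hl.
    by move: Hl => /= [<- <-]; constructor.
  rewrite last_rcons in Hl; subst q.
  rewrite rcons_path in Hp; case/andP: Hp => Hp Hs.
  case E: (last (1, 1) T'') Hs => [z0 l0] Hs.
  rewrite -rcons_cons; apply: trvS Hs; exact: IH.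
- elim=> [|z0 l0 T0 z' l' _ [T' [-> [Hp Hl]]] Hs].
    by exists [::].
  exists (rcons T' (z', l')); split; first by rewrite rcons_cons.
  by rewrite rcons_path Hp Hl Hs last_rcons.
Qed.

Lemma stepP z0 l0 z l : trav_step (z0, l0) (z, l) ->
  [/\ z = z0 \/ z = z0.+1, l = l0 \/ l = l0.+1 & (z, l) <> (z0, l0)].
Proof.
rewrite /trav_step /= => /and3P [/orP [/eqP|/eqP] -> /orP [/eqP|/eqP] -> /eqP];
  by split; auto.
Qed.

Lemma trv_bounds z l T : trv z l T ->
  [/\ (1 <= z)%N, (1 <= l)%N &
   forall p, p \in T -> [&& (1 <= p.1)%N, (p.1 <= z)%N, (1 <= p.2)%N & (p.2 <= l)%N]].
Proof.
elim=> [|z0 l0 T0 z' l' _ [H1 H2 H3] /stepP [Hz Hl _]].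
  by split=> // p; rewrite inE => /eqP ->.
have Hz' : (z0 <= z')%N by case: Hz => ->.
have Hl' : (l0 <= l')%N by case: Hl => ->.
split; [exact: leq_trans Hz'|exact: leq_trans Hl'|].
move=> p; rewrite mem_rcons inE => /orP [/eqP -> /=|/H3 /and4P [-> a -> b]].
  by rewrite (leq_trans H1 Hz') (leq_trans H2 Hl') !leqnn.
by rewrite (leq_trans a Hz') (leq_trans b Hl').
Qed.

Lemma trv_last z l T : trv z l T -> (z, l) \in T.
Proof. by case=> [|*]; rewrite ?mem_rcons mem_head. Qed.

Lemma sector_rcons (x : seq R) T q j : sector x (rcons T q) j =
  if q.2 == j then rcons (sector x T j) (entry x q.1) else sector x T j.
Proof. by rewrite /sector filter_rcons; case: ifP => //; rewrite map_rcons. Qed.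

Lemma profile_S (x : seq R) l T : profile x l.+1 T =
  rcons (profile x l T) (seqmin (sector x T l.+1), seqmax (sector x T l.+1)).
Proof.
rewrite /profile; have -> : iota 1 l.+1 = rcons (iota 1 l) l.+1.
  by rewrite -cats1 -(addn1 l) iotaD add1n addn1.
by rewrite map_rcons.
Qed.

Lemma profile_eq (x y : seq R) l T T' :
  (forall j, (1 <= j)%N -> (j <= l)%N -> sector x T j = sector y T' j) ->
  profile x l T = profile y l T'.
Proof.
move=> H; apply/eq_in_map => j; rewrite mem_iota add1n ltnS => /andP [a b].
by rewrite H.
Qed.

Lemma foldr_min_rcons (a b : R) s :
  foldr Order.min (Order.min a b) s = Order.min (foldr Order.min b s) a.
Proof. elim: s => [|c s IH] /=; first by rewrite minC. by rewrite IH minA. Qed.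

Lemma foldr_max_rcons (a b : R) s :
  foldr Order.max (Order.max a b) s = Order.max (foldr Order.max b s) a.
Proof. elim: s => [|c s IH] /=; first by rewrite maxC. by rewrite IH maxA. Qed.

Lemma seqmin_rcons (s : seq R) a y : y \in s ->
  seqmin (rcons s a) = Order.min (seqmin s) a.
Proof. case: s => // b s _; by rewrite /seqmin /= foldr_rcons foldr_min_rcons. Qed.

Lemma seqmax_rcons (s : seq R) a y : y \in s ->
  seqmax (rcons s a) = Order.max (seqmax s) a.
Proof. case: s => // b s _; by rewrite /seqmax /= foldr_rcons foldr_max_rcons. Qed.

Lemma entry_rcons (u : seq R) a i : (1 <= i)%N -> (i <= size u)%N ->
  entry (rcons u a) i = entry u i.
Proof.
move=> h1 h2; rewrite /entry nth_rcons.
by case: i h1 h2 => // i _ /= ->.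
Qed.

Lemma entry_rcons_last (u : seq R) a : entry (rcons u a) (size u).+1 = a.
Proof. by rewrite /entry nth_rcons /= ltnn eqxx. Qed.

Lemma sector_rconsx (u : seq R) a T j :
  (forall p, p \in T -> (1 <= p.1)%N && (p.1 <= size u)%N) ->
  sector (rcons u a) T j = sector u T j.
Proof.
move=> H; apply/eq_in_map => p; rewrite mem_filter => /andP [_ /H /andP [h1 h2]].
exact: entry_rcons.
Qed.

Lemma sector_nil (x : seq R) T j :
  (forall p, p \in T -> (p.2 < j)%N) -> sector x T j = [::].
Proof.
move=> H; rewrite /sector; have -> : [seq p <- T | p.2 == j] = [::] => //.
apply/eqP; rewrite -[_ == _]negbK -has_filter; apply/hasP => [[p /H]].
by rewrite ltn_neqAle => /andP [/negbTE ->].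
Qed.

Lemma profile_up (x : seq R) l T z :
  (forall p, p \in T -> (p.2 <= l)%N) ->
  profile x l.+1 (rcons T (z, l.+1)) = rcons (profile x l T) (entry x z, entry x z).
Proof.
move=> H; rewrite profile_S sector_rcons /= eqxx sector_nil; last first.
  by move=> p /H.
congr rcons; apply: profile_eq => j _ jl.
by rewrite sector_rcons /= eqn_leq ltnNge jl.
Qed.

Lemma profile_right (u : seq R) a l T :
  trv (size u) l.+1 T ->
  profile (rcons u a) l.+1 (rcons T ((size u).+1, l.+1)) =
  rcons (profile u l T) (Order.min (seqmin (sector u T l.+1)) a,
                         Order.max (seqmax (sector u T l.+1)) a).
Proof.
move=> Ht; have [_ _ Hb] := trv_bounds Ht.
have Hx : forall p, p \in T -> (1 <= p.1)%N && (p.1 <= size u)%N.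
  by move=> p /Hb /and4P [-> -> _ _].
have Hm : entry u (size u) \in sector u T l.+1.
  by apply: (map_f (fun p => entry u p.1) (x := (size u, l.+1))); rewrite mem_filter eqxx trv_last.
rewrite profile_S sector_rcons /= eqxx entry_rcons_last sector_rconsx //.
rewrite (seqmin_rcons _ Hm) (seqmax_rcons _ Hm); congr rcons.
apply: profile_eq => j _ jl.
by rewrite sector_rcons /= eqn_leq ltnNge jl /= sector_rconsx.
Qed.

Lemma profile_rconsx (u : seq R) a l T :
  trv (size u) l T -> profile (rcons u a) l T = profile u l T.
Proof.
move=> Ht; have [_ _ Hb] := trv_bounds Ht.
apply: profile_eq => j _ _; apply: sector_rconsx.
by move=> p /Hb /and4P [-> -> _ _].
Qed.




Fixpoint DR (r : seq R) : nat -> seq (R * R) -> Prop :=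
  match r with
  | [::] => fun i P => i = 0%N /\ P = [::]
  | a :: r' => fix g (i : nat) : seq (R * R) -> Prop :=
      match i with
      | 0 => fun _ => False
      | i'.+1 => fun P =>
          (exists Q0 p, DR r' i'.+1 (rcons Q0 p) /\
               P = rcons Q0 (Order.min p.1 a, Order.max p.2 a)) \/
          (exists Q, (g i' Q \/ DR r' i' Q) /\ P = rcons Q (a, a))
      end
  end.

Lemma DR_cons a r i P : DR (a :: r) i.+1 P <->
  (exists Q0 p, DR r i.+1 (rcons Q0 p) /\
               P = rcons Q0 (Order.min p.1 a, Order.max p.2 a)) \/
  (exists Q, (DR (a :: r) i Q \/ DR r i Q) /\ P = rcons Q (a, a)).
Proof. by []. Qed.

Lemma trv_inv z l T : trv z l T ->
  (z = 1%N /\ l = 1%N /\ T = [:: (1, 1)%N]) \/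
  exists z0 l0 T0, trv z0 l0 T0 /\ trav_step (z0, l0) (z, l) /\ T = rcons T0 (z, l).
Proof. case=> [|z0 l0 T0 z' l' H1 H2]; [left | right; exists z0, l0, T0]; by []. Qed.

Definition E (x : seq R) l P := exists T, trv (size x) l T /\ P = profile x l T.
Definition E' (x : seq R) l P := (x = [::] /\ l = 0%N /\ P = [::]) \/ E x l P.

Lemma E_nil l P : ~ E [::] l P.
Proof. by case=> T [/trv_bounds [] ]. Qed.

Lemma E_0 x P : ~ E x 0 P.
Proof. by case=> T [/trv_bounds [] ]. Qed.

Lemma E_DR x l P : E' x l P <-> DR (rev x) l P.
Proof.
elim/last_ind: x l P => [|u a IHu] l P.
  rewrite /E' /=; split.
    by case=> [[_ [-> ->]]|/E_nil].
  by case=> -> ->; left.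
rewrite rev_rcons.
have E'E : forall l P, E' (rcons u a) l P <-> E (rcons u a) l P.
  move=> l' P'; split; last by right.
  by case=> // [[/eqP]]; rewrite -size_eq0 size_rcons.
elim: l P => [|l IHl] P.
  by rewrite E'E; split => // /E_0.
rewrite E'E DR_cons; split.
- case=> T []; rewrite size_rcons => Ht ->.
  case/trv_inv: Ht => [[[H0] [[Hl] ->]]|[z0 [l0 [T0 [Ht0 [Hs ->]]]]]].
    subst l; have Hu0 : u = [::] by case: u {IHu E'E IHl} H0.
    subst u.
    right; exists [::]; split; last first.
      by rewrite /profile /sector /seqmin /seqmax /entry.
    by right.
  case/stepP: Hs => [[Hz|Hz] [Hl|Hl] Hne].
  + by case: Hne; rewrite Hz Hl.
  +
    subst z0; case: Hl => Hl; subst l0.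
    right; exists (profile (rcons u a) l T0); split.
      left; apply/IHl; rewrite E'E; exists T0; split=> //.
      by rewrite size_rcons.
    have [_ _ Hb] := trv_bounds Ht0.
    rewrite profile_up ?entry_rcons_last //.
    by move=> p /Hb /and4P [].
  +
    case: Hz => Hz; subst z0 l0; left.
    exists (profile u l T0), (seqmin (sector u T0 l.+1), seqmax (sector u T0 l.+1)).
    split; last by rewrite profile_right.
    apply/IHu; right; exists T0; split=> //; by rewrite profile_S.
  +
    case: Hz => Hz; case: Hl => Hl; subst z0 l0; right.
    exists (profile u l T0); split.
      right; apply/IHu; right; by exists T0.
    have [_ _ Hb] := trv_bounds Ht0.
    rewrite profile_up ?entry_rcons_last ?profile_rconsx //.
    by move=> p /Hb /and4P [].
- case.
  + case=> Q0 [p [/IHu [[_ [//]]|[T0 [Ht0 HP]]] ->]].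
    have [Hu _ _] := trv_bounds Ht0.
    exists (rcons T0 ((size u).+1, l.+1)); split.
      rewrite size_rcons; apply: trvS Ht0 _.
      by rewrite /trav_step /= !eqxx orbT /= -[_ != _]negbK xpair_eqE eqxx andbT eqn_leq ltnn.
    rewrite profile_right //; move: HP; rewrite profile_S => /rcons_inj [-> ->] //.
  + case=> Q [[/IHl|/IHu] HQ ->].
    * move/E'E: HQ => [T0 [Ht0 ->]].
      have [_ _ Hb] := trv_bounds Ht0.
      move: Ht0; rewrite size_rcons => Ht0.
      exists (rcons T0 ((size u).+1, l.+1)); split.
        rewrite size_rcons; apply: trvS Ht0 _.
        by rewrite /trav_step /= !eqxx orbT /= -[_ != _]negbK xpair_eqE eqxx /= eqn_leq ltnn.
      rewrite profile_up ?entry_rcons_last //.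
      by move=> q /Hb /and4P [].
    * case: HQ => [[-> [-> ->]]|[T0 [Ht0 ->]]].
        by exists [:: (1, 1)%N]; split => //; constructor.
      have [Hu _ Hb] := trv_bounds Ht0.
      exists (rcons T0 ((size u).+1, l.+1)); split.
        rewrite size_rcons; apply: trvS Ht0 _.
        by rewrite /trav_step /= !eqxx !orbT /= -[_ != _]negbK xpair_eqE /= eqn_leq ltnn.
      rewrite profile_up ?entry_rcons_last ?profile_rconsx //.
      by move=> q /Hb /and4P [].
Qed.


Definition eqv l (r1 r2 : seq R) :=
  forall i, (i <= l)%N -> forall P, DR r1 i P <-> DR r2 i P.

Lemma eqv_sym l r1 r2 : eqv l r1 r2 -> eqv l r2 r1.
Proof. by move=> H i Hi P; split => /(H i Hi P). Qed.

Lemma eqv_trans l r1 r2 r3 : eqv l r1 r2 -> eqv l r2 r3 -> eqv l r1 r3.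
Proof. by move=> H1 H2 i Hi P; split => [/(H1 i Hi P)/(H2 i Hi P)|/(H2 i Hi P)/(H1 i Hi P)]. Qed.

Lemma eqv_cons l a r1 r2 : eqv l r1 r2 -> eqv l (a :: r1) (a :: r2).
Proof.
move=> H; elim=> [|i IH] Hi P; first by [].
have Hi' : (i <= l)%N by apply: ltnW.
rewrite !DR_cons; split.
- case=> [[Q0 [p [HQ ->]]]|[Q [HQ ->]]].
    by left; exists Q0, p; split => //; apply/(H _ Hi).
  right; exists Q; split => //; case: HQ => HQ; [left; apply/(IH Hi')|right; apply/(H _ Hi')] => //.
- case=> [[Q0 [p [HQ ->]]]|[Q [HQ ->]]].
    by left; exists Q0, p; split => //; apply/(H _ Hi).
  right; exists Q; split => //; case: HQ => HQ; [left; apply/(IH Hi')|right; apply/(H _ Hi')] => //.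
Qed.

Lemma eqv_cat l v r1 r2 : eqv l r1 r2 -> eqv l (v ++ r1) (v ++ r2).
Proof. by elim: v => [|a v IH] //= H; apply: eqv_cons; apply: IH. Qed.

Lemma eqv_cut l (u u' v : seq R) : eqv l (rev u) (rev u') ->
  eqv l (rev (u ++ v)) (rev (u' ++ v)).
Proof. by rewrite !rev_cat; apply: eqv_cat. Qed.

Lemma DR0 r P : DR r 0 P <-> r = [::] /\ P = [::].
Proof. by case: r => [|a r] /=; [split; case=> _ ->|split => // [[]]]. Qed.

Lemma min_in (a b : R) : Order.min a b = a \/ Order.min a b = b.
Proof. rewrite /Order.min; case: ifP; auto. Qed.
Lemma max_in (a b : R) : Order.max a b = a \/ Order.max a b = b.
Proof. rewrite /Order.max; case: ifP; auto. Qed.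

Lemma DR_shape r i P : DR r i P ->
  size P = i /\ forall p, p \in P -> p.1 \in r /\ p.2 \in r.
Proof.
elim: r i P => [|a r IH] i P.
  by case=> -> ->.
elim: i P => [|i IHi] P //; rewrite DR_cons.
case=> [[Q0 [p [/IH [Hs Hm] ->]]]|[Q [HQ ->]]].
  split; first by move: Hs; rewrite !size_rcons.
  move=> q; rewrite mem_rcons inE => /orP [/eqP -> /=|Hq].
    have [h1 h2] : p.1 \in r /\ p.2 \in r by apply: Hm; rewrite mem_rcons mem_head.
    by split; [case: (min_in p.1 a) => ->|case: (max_in p.2 a) => ->];
       rewrite inE ?eqxx ?h1 ?h2 ?orbT.
  have [h1 h2] : q.1 \in r /\ q.2 \in r by apply: Hm; rewrite mem_rcons inE Hq orbT.
  by rewrite !inE h1 h2 !orbT.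
have [Hs Hm] : size Q = i /\ forall p, p \in Q -> p.1 \in a :: r /\ p.2 \in a :: r.
  case: HQ => [/IHi //|/IH [Hs Hm]]; split => // p /Hm [h1 h2].
  by rewrite !inE h1 h2 !orbT.
split; first by rewrite size_rcons Hs.
move=> q; rewrite mem_rcons inE => /orP [/eqP -> /=|/Hm //].
by rewrite inE eqxx.
Qed.

Lemma Dprof_DR (x : seq R) l : x <> [::] -> Dprof x l = DR (rev x) l.
Proof.
move=> Hx; apply: functional_extensionality => P.
apply: propositional_extensionality.
rewrite -E_DR /E' /Dprof /E; split.
  by case=> T [/traversal_trv Ht ->]; right; exists T.
case=> [[//]|[T [Ht ->]]]; exists T; split => //; exact/traversal_trv.
Qed.

Lemma eqv_Dprof l (x x' : seq R) : eqv l (rev x) (rev x') -> Dprof x l = Dprof x' l.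
Proof.
move=> H.
have H0 := H 0%N (leq0n l) [::].
rewrite !DR0 in H0.
case: x H H0 => [|a x] H H0.
  have [Hx' _] := proj1 H0 (conj erefl erefl).
  by move/(f_equal rev): Hx'; rewrite revK => ->.
case: x' H H0 => [|b x'] H H0.
  have [Hx' _] := proj2 H0 (conj erefl erefl).
  by move/(f_equal size): Hx'; rewrite size_rev.
rewrite !Dprof_DR //.
by apply: functional_extensionality => P; apply: propositional_extensionality; apply: H.
Qed.

Section Count.
Variable V : seq R.
Definition VV := [seq (a, b) | a <- V, b <- V].
Fixpoint lists i : seq (seq (R * R)) :=
  if i is i'.+1 then [seq p :: q | p <- VV, q <- lists i'] else [:: [::]].
Fixpoint Sall j := if j is j'.+1 then lists j ++ Sall j' else lists 0.

Lemma mem_lists q : all (mem VV) q -> q \in lists (size q).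
Proof.
elim: q => [|p q IH] /=; first by rewrite inE.
by case/andP => Hp Hq; apply: allpairs_f => //; apply: IH.
Qed.

Lemma mem_Sall j q : (size q <= j)%N -> all (mem VV) q -> q \in Sall j.
Proof.
elim: j => [|j IH] Hs Hq.
  by move: Hs; rewrite leqn0 => /eqP Hs; move: (mem_lists Hq); rewrite Hs.
have -> : Sall j.+1 = lists j.+1 ++ Sall j by [].
rewrite mem_cat; move: Hs; rewrite leq_eqVlt => /orP [/eqP <-|Hs].
  by rewrite mem_lists.
by rewrite IH ?orbT.
Qed.

Lemma size_lists i : size (lists i) = (size V * size V) ^ i.
Proof. by elim: i => [|i IH] //=; rewrite size_allpairs IH size_allpairs expnS. Qed.

Lemma size_Sall j : (2 <= size V * size V)%N -> (size (Sall j) <= (size V * size V) ^ j.+1)%N.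
Proof.
move=> Hm; elim: j => [|j IH]; first by rewrite /= expn1 (leq_trans _ Hm).
have -> : Sall j.+1 = lists j.+1 ++ Sall j by [].
rewrite size_cat size_lists.
apply: (leq_trans (leq_add (leqnn _) IH)).
rewrite addnn -mul2n [X in (_ <= X)%N]expnS.
by apply: leq_mul.
Qed.
End Count.

Lemma pigeon (x0 : seq R) l (x : seq R) :
  (2 <= size (undup x0))%N -> all (fun a => a \in x0) x ->
  (2 ^ (size (undup x0) ^ (2 * l + 2)) <= size x)%N ->
  exists k1 k2, (k1 < k2 <= size x)%N /\ eqv l (rev (take k1 x)) (rev (take k2 x)).
Proof.
move=> Hn Hx Hsz.
set V := undup x0; set n := size V.
set S := undup (Sall V l).
pose code (k : 'I_(size x).+1) : {set seq_sub S} :=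
  [set s | `[< DR (rev (take k x)) (size (ssval s)) (ssval s) >]].
have Hm : (2 <= n * n)%N by rewrite (leq_trans Hn) // leq_pmulr // (leq_trans _ Hn).
have Hcard : (#|{set seq_sub S}| <= 2 ^ (n ^ (2 * l + 2)))%N.
  rewrite -cardsT -powersetT card_powerset cardsT card_seq_sub ?undup_uniq //.
  rewrite leq_pexp2l // (leq_trans (size_undup _)) //.
  have -> : (2 * l + 2 = 2 * l.+1)%N by rewrite mulnS addnC.
  by rewrite expnM -mulnn; apply: size_Sall.
have /injectivePn [k1 [k2 Hne Heq]] : ~~ injectiveb code.
  apply/negP => /injectiveP /leq_card; rewrite card_ord => H.
  by move: (leq_trans H (leq_trans Hcard Hsz)); rewrite ltnn.
have key : forall (k k' : 'I_(size x).+1), code k = code k' ->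
    forall i, (i <= l)%N -> forall P, DR (rev (take k x)) i P -> DR (rev (take k' x)) i P.
  move=> k k' Hc i Hi P HP.
  have [Hs Hmem] := DR_shape HP.
  have HPS : P \in S.
    rewrite mem_undup; apply: mem_Sall; first by rewrite Hs.
    apply/allP => p /Hmem [h1 h2].
    have h x1 : x1 \in rev (take k x) -> x1 \in V.
      rewrite mem_rev => /mem_take hx; rewrite mem_undup.
      by move/allP: Hx => /(_ _ hx).
    by case: p h1 h2 => [p1 p2] /= /h h1 /h h2; apply: allpairs_f.
  have : SeqSub HPS \in code k by rewrite inE /=; apply/asboolP; rewrite Hs.
  by rewrite Hc inE /= Hs => /asboolP.
case: (ltngtP k1 k2) => Hk.
- exists k1, k2; split; first by rewrite Hk -ltnS ltn_ord.
  by move=> i Hi P; split; apply: key.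
- exists k2, k1; split; first by rewrite Hk -ltnS ltn_ord.
  by move=> i Hi P; split; apply: key.
- by move: Hne; rewrite (val_inj Hk) eqxx.
Qed.


Lemma reduce (x0 : seq R) l B :
  (forall x, all (fun a => a \in x0) x -> (B <= size x)%N ->
     exists x'', all (fun a => a \in x) x'' /\ (size x'' < size x)%N /\
                 eqv l (rev x) (rev x'')) ->
  forall x, all (fun a => a \in x0) x ->
    exists x', all (fun a => a \in x) x' /\ (size x' < B)%N /\ eqv l (rev x) (rev x').
Proof.
move=> H x.
have [s] := ubnP (size x); elim: s x => [|s IH] x //.
rewrite ltnS => Hs Hx.
case: (ltnP (size x) B) => HB.
  by exists x; split; [apply/allP|split].
have [x'' [Hx'' [Hs'' He'']]] := H x Hx HB.
have Hx0'' : all (fun a => a \in x0) x''.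
  by apply/allP => a /(allP Hx'') /(allP Hx).
have [x' [Hx' [Hs' He']]] := IH x'' (leq_trans Hs'' Hs) Hx0''.
exists x'; split; last by split => //; apply: eqv_trans He''  He'.
by apply/allP => a /(allP Hx') /(allP Hx'').
Qed.

Lemma rcons_nseq (y : R * R) i : rcons (nseq i y) y = nseq i.+1 y.
Proof. by elim: i => //= i ->. Qed.

Lemma DR_b (b : R) i P : DR [:: b] i P <-> (0 < i)%N /\ P = nseq i (b, b).
Proof.
elim: i P => [|i IH] P; first by split => // [[]].
rewrite DR_cons; split.
- case=> [[Q0 [p [[]]]]|[Q [[/IH [_ ->]|[-> ->]] ->]]] //;
    by split => //; rewrite rcons_nseq.
- case=> _ ->; right; case: i IH => [|i] IH.
    by exists [::]; split => //; right.
  by exists (nseq i.+1 (b, b)); split; [left; apply/IH|rewrite rcons_nseq].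
Qed.

Lemma DR_bb (b : R) i P : DR [:: b; b] i P <-> (0 < i)%N /\ P = nseq i (b, b).
Proof.
elim: i P => [|i IH] P; first by split => // [[]].
rewrite DR_cons; split.
- case=> [[Q0 [p [/DR_b [_ HQ] ->]]]|[Q [[/IH [_ ->]|/DR_b [_ ->]] ->]]];
    try by split => //; rewrite rcons_nseq.
  move: HQ; rewrite -rcons_nseq => /rcons_inj [-> ->] /=.
  by rewrite minxx maxxx rcons_nseq.
- case=> _ ->; left; exists (nseq i (b, b)), (b, b); split.
    by apply/DR_b; rewrite rcons_nseq.
  by rewrite /= minxx maxxx rcons_nseq.
Qed.

Lemma eqv_dup l (b : R) : eqv l [:: b; b] [:: b].
Proof. by move=> i _ P; rewrite DR_b DR_bb. Qed.

End S.

Local Open Scope ring_scope.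

Theorem lemma9p11 (R : realType) :
  exists C : nat, forall (x : seq R) (l : nat),
    exists x' : seq R,
      all (fun a => a \in x) x' /\
      (size x' <= C * 2 ^ ((size (undup x)) ^ (2 * l + 2)))%N /\
      Dprof x l = Dprof x' l.
Proof.
exists 1%N => x l.
case Ex: x => [|a x1].
  by exists [::].
rewrite -Ex.
have Hxx : all (fun a => a \in x) x by apply/allP.
have Hn1 : (1 <= size (undup x))%N.
  have : a \in undup x by rewrite mem_undup Ex mem_head.
  by case: (undup x).
rewrite mul1n.
case: (ltnP 1 (size (undup x))) => Hn.
- have Hred : forall y, all (fun a => a \in x) y ->
      (2 ^ (size (undup x) ^ (2 * l + 2)) <= size y)%N ->
     exists x'', all (fun a => a \in y) x'' /\ (size x'' < size y)%N /\
                 eqv l (rev y) (rev x'').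
    move=> y Hy Hsy.
    have [k1 [k2 [/andP [Hk1 Hk2] He]]] := pigeon Hn Hy Hsy.
    exists (take k1 y ++ drop k2 y); split.
      by apply/allP => b; rewrite mem_cat => /orP [/mem_take|/mem_drop].
    split.
      rewrite size_cat size_take size_drop.
      case: ifP => H1; last by move: H1; rewrite (leq_trans Hk1 Hk2).
      rewrite -ltn_subRL; apply: ltn_sub2l; first exact: leq_trans Hk1 Hk2.
      exact: leq_trans Hk1 _.
    rewrite -{1}(cat_take_drop k2 y).
    by apply: eqv_cut; apply: eqv_sym.
  have [x' [Hx' [Hs He]]] := reduce Hred Hxx.
  by exists x'; split => //; split; [apply: ltnW | apply: eqv_Dprof].
- have Hu : exists c, undup x = [:: c].
    by case: (undup x) Hn1 Hn => [|c [|]] //; exists c.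
  case: Hu => c Hc.
  have Hall : forall y, y \in x -> y = c.
    by move=> y; rewrite -mem_undup Hc inE => /eqP.
  have Hred : forall y, all (fun a => a \in x) y -> (2 <= size y)%N ->
     exists x'', all (fun a => a \in y) x'' /\ (size x'' < size y)%N /\
                 eqv l (rev y) (rev x'').
    move=> [|b [|b' v]] // Hy _.
    move: Hy => /= /and3P [/Hall Hb /Hall Hb' _]; subst b b'.
    exists (c :: v); split; first by apply/allP => y; rewrite !inE => /orP [->|->]; rewrite ?orbT.
    split => //.
    rewrite -[c :: c :: v]/([:: c; c] ++ v) -[c :: v]/([:: c] ++ v).
    by apply: eqv_cut; rewrite /rev /=; apply: eqv_dup.
  have [x' [Hx' [Hs He]]] := reduce Hred Hxx.
  exists x'; split => //; split; last exact: eqv_Dprof.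
  by rewrite Hc /= exp1n expn1 ltnW.
Qed.
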